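(* Let $v\in\tilde{\mathcal{X}}^1$. Then $\inf_{x\in\mathbb{R}}|v(x)|\le\frac{E(v)}{\sqrt2\,|p(v)|}$ (the right-hand side being $+\infty$ if $p(v)=0$). In particular, if $\delta(v)=1-\frac{E(v)}{\sqrt2|p(v)|}>0$, then for every $0<\delta<\delta(v)$ there exists $x_\delta\in\mathbb{R}$ with $1-|v(x_\delta)|\ge\delta$.
   Context: $\mathcal{X}^1=\{w\in L^\infty(\mathbb{R};\mathbb{C}):\ w'\in L^2,\ 1-|w|^2\in L^2\}$; $\tilde{\mathcal{X}}^1=\{v\in\mathcal{X}^1:\ |v(x)|>0\ \forall x\}$. $E(v)=\frac12\int|v'|^2+\frac14\int(1-|v|^2)^2$. For $v\in\tilde{\mathcal{X}}^1$ write $v=\varrho e^{i\varphi}$ with $\varrho=|v|$ and $\varphi$ a continuous real phase; $p(v)=\frac12\int_\mathbb{R}(\varrho^2-1)\varphi'$. *)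

(* Defs.v *)
From HB Require Import structures.
From mathcomp Require Import all_boot all_order all_algebra.
From mathcomp Require Import all_classical all_reals all_analysis.
Set Implicit Arguments. Unset Strict Implicit. Unset Printing Implicit Defensive.
Import Order.TTheory GRing.Theory Num.Theory numFieldNormedType.Exports.
Local Open Scope classical_set_scope.
Local Open Scope ring_scope.

Section GP.
Variable R : realType.
Notation leb := (@lebesgue_measure R).

Definition L2fun (f : R -> R) : Prop :=
  measurable_fun setT f /\ leb.-integrable setT (fun x => (f x ^+ 2)%:E).

(* g is the (weak) derivative of u on R: g locally integrable and
   u b - u a = ∫_a^b g for all a <= b (1-d characterization of W^{1,1}_loc). *)
Definition weak_deriv (u g : R -> R) : Prop :=
  (forall a b : R, a <= b -> leb.-integrable `[a, b] (fun x => (g x)%:E)) /\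
  (forall a b : R, a <= b -> Rintegral leb `[a, b] g = u b - u a).

(* v = u1 + i u2 *)
Definition modv (u1 u2 : R -> R) (x : R) : R := Num.sqrt (u1 x ^+ 2 + u2 x ^+ 2).

(* v ∈ X^1 with weak derivative v' = g1 + i g2 *)
Definition in_X1 (u1 u2 g1 g2 : R -> R) : Prop :=
  (exists M : R, forall x, modv u1 u2 x <= M) /\
  weak_deriv u1 g1 /\ weak_deriv u2 g2 /\ L2fun g1 /\ L2fun g2 /\
  L2fun (fun x => 1 - modv u1 u2 x ^+ 2).

Definition in_tX1 (u1 u2 g1 g2 : R -> R) : Prop :=
  in_X1 u1 u2 g1 g2 /\ forall x, 0 < modv u1 u2 x.

Definition energy (u1 u2 g1 g2 : R -> R) : R :=
  2^-1 * Rintegral leb setT (fun x => g1 x ^+ 2 + g2 x ^+ 2)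
  + 4^-1 * Rintegral leb setT (fun x => (1 - modv u1 u2 x ^+ 2) ^+ 2).

Definition is_phase (u1 u2 phi : R -> R) : Prop :=
  continuous phi /\
  forall x, u1 x = modv u1 u2 x * cos (phi x) /\ u2 x = modv u1 u2 x * sin (phi x).

Definition momentum (u1 u2 dphi : R -> R) : R :=
  2^-1 * Rintegral leb setT (fun x => (modv u1 u2 x ^+ 2 - 1) * dphi x).

End GP.

(* Main.v *)
Require Import Defs.
From HB Require Import structures.
From mathcomp Require Import all_boot all_order all_algebra.
From mathcomp Require Import all_classical all_reals all_analysis.
From mathcomp Require Import measurable_realfun ring lra.
Import Order.TTheory GRing.Theory Num.Theory numFieldNormedType.Exports.
Local Open Scope classical_set_scope.
Local Open Scope ring_scope.
Lemma wd_is_derive {R : realType} (u g : R -> R) x :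
  weak_deriv u g -> lebesgue_pt g x -> is_derive x 1 u (g x).
Proof.
move=> [ig eq] lp.
have ltrDl1 : forall y : R, y < y + 1 by move=> y; rewrite ltrDl ltr01.
have x1 : x - 1 <= x + 1 by rewrite lerD2l; apply: (@le_trans _ _ 0); rewrite ?lerN10 ?ler01.
have := @FTC1_lebesgue_pt R g (BLeft (x-1)) x (x+1) (ltrDl1 x) (ig _ _ x1).
move=> /(_ _ lp) [].
  by rewrite /Order.lt /= ltrBlDr ltrDl ltr01.
set F := (fun y : R => _ : R).
move=> dF F'.
set c := u (x - 1).
have H : \near x, (fun y => F y + c) x = u x.
  apply/nbhs_ballP; exists 1 => //= y /= hy.
  have hy' : x - 1 <= y.
    move: hy; rewrite /ball /= ltr_distlC => /andP[+ _].
    exact: ltW.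
  by rewrite /F /= eq // /c subrK.
apply: near_eq_is_derive H _.
rewrite -F' derive1E -[X in is_derive _ _ _ X]addr0.
apply: is_deriveD.
exact: derivableP.
Qed.

Lemma bigcup_itv (R : realType) :
  \bigcup_(n in [set: nat]) `[- (n%:R : R), n%:R]%classic = [set: R].
Proof.
apply/seteqP; split => // x _.
exists (Num.truncn `|x|).+1 => //=.
rewrite in_itv /= -ler_norml; apply: ltW; exact: truncnS_gt.
Qed.

Lemma wd_meas {R : realType} (u g : R -> R) :
  weak_deriv u g -> measurable_fun [set: R] g.
Proof.
move=> [ig _]; rewrite -bigcup_itv.
apply/measurable_fun_bigcup => [n|n]; first exact: measurable_itv.
have : - (n%:R) <= (n%:R : R) by rewrite lerNl; apply: (@le_trans _ _ 0); rewrite ?oppr_le0 ler0n.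
move=> /ig /integrableP [+ _].
by move/measurable_EFinP.
Qed.

Lemma wd_locint {R : realType} (u g : R -> R) :
  weak_deriv u g -> locally_integrable [set: R] g.
Proof.
move=> wd; split; first exact: wd_meas wd.
  exact: openT.
move=> K _ cK.
have := compact_bounded cK; case => M0 [_ hM].
have hM0 : M0 < `|M0| + 1 by rewrite (le_lt_trans (ler_norm _)) // ltrDl ltr01.
have {}hM := hM _ hM0.
set M := `|M0| + 1 in hM.
have hMM : - M <= M by rewrite lerNl; apply: (@le_trans _ _ 0); rewrite ?oppr_le0 /M addr_ge0.
move: (wd) => [ig _].
have /integrableP [mg fin] := ig _ _ hMM.
apply: le_lt_trans fin.
apply: ge0_subset_integral => //.
- exact: compact_measurable.
- apply/measurable_EFinP; apply: measurableT_comp => //.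
  by move/measurable_EFinP: mg.
- by move=> x /hM /=; rewrite in_itv /= -ler_norml.
Qed.

Lemma pointwise_ineq {R : realType} (u1 u2 g1 g2 phi dphi : R -> R) (x : R) :
  is_phase u1 u2 phi -> is_derive x (1:R) u1 (g1 x) -> is_derive x (1:R) u2 (g2 x) ->
  is_derive x (1:R) phi (dphi x) ->
  (modv u1 u2 x * dphi x) ^+ 2 <= g1 x ^+ 2 + g2 x ^+ 2.
Proof.
move=> [_ ph] d1 d2 dp.
have ds : is_derive x 1 (sin \o phi) (cos (phi x) * dphi x).
  exact: is_derive1_comp.
have dc : is_derive x 1 (cos \o phi) (- sin (phi x) * dphi x).
  exact: is_derive1_comp.
have Hd := is_deriveB (is_deriveM d1 ds) (is_deriveM d2 dc).
have Heq : (u1 * (sin \o phi) - u2 * (cos \o phi)) = cst 0.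
  apply/funext => t /=.
  rewrite !fctE /=; have [-> ->] := ph t.
  rewrite /=. ring.
have := @derive_val _ _ _ _ _ _ _ Hd; rewrite Heq derive_cst => /esym H.
move: H; rewrite /= /GRing.scale /=.
have [e1 e2] := ph x.
have cs := cos2Dsin2 (phi x).
rewrite e1 e2 => H.
set r := modv u1 u2 x in H *.
set c := cos (phi x) in H cs *; set s := sin (phi x) in H cs *.
have rd : r * dphi x = c * g2 x - s * g1 x.
  have -> : r * dphi x = r * dphi x * (c ^+ 2 + s ^+ 2) by rewrite cs mulr1.
  by apply/eqP; rewrite -subr_eq0 -H; apply/eqP; ring.
rewrite rd.
have : (c * g2 x - s * g1 x) ^+ 2 + (c * g1 x + s * g2 x) ^+ 2 = (c ^+ 2 + s ^+ 2) * (g1 x ^+ 2 + g2 x ^+ 2) by ring.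
rewrite cs mul1r => <-.
by rewrite lerDl sqr_ge0.
Qed.


Lemma amgm {R : realType} (s m r dp G : R) :
  s * s = 2 -> 0 <= s -> 0 <= m -> m <= r -> (r * dp) ^+ 2 <= G ->
  m * `|(r ^+ 2 - 1) * dp| <= s * (2^-1 * G + 4^-1 * (1 - r ^+ 2) ^+ 2).
Proof.
move=> ss s0 m0 mr hG.
set a := `|r * dp|; set b := `|1 - r ^+ 2|.
have r0 : 0 <= r by apply: le_trans mr.
have h1 : m * `|(r ^+ 2 - 1) * dp| <= a * b.
  have -> : a * b = r * (`|(r ^+ 2 - 1) * dp|).
    by rewrite /a /b !normrM (distrC 1) (ger0_norm r0); ring.
  by rewrite ler_wpM2r.
have ha : a ^+ 2 <= G by rewrite /a real_normK ?num_real.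
have hb : b ^+ 2 = (1 - r ^+ 2) ^+ 2 by rewrite /b real_normK ?num_real.
have a0 : 0 <= a by exact: normr_ge0.
have b0 : 0 <= b by exact: normr_ge0.
have hsq : 0 <= s * (s * a - b) ^+ 2 by rewrite mulr_ge0 ?sqr_ge0.
rewrite -hb; apply: le_trans h1 _.
have e : s * (s * a - b) ^+ 2 = 2 * s * a ^+ 2 - 4 * (a * b) + s * b ^+ 2.
  have -> : s * (s * a - b) ^+ 2 = (s * s) * s * a ^+ 2 - 2 * (s * s) * (a * b) + s * b ^+ 2 by ring.
  rewrite ss; ring.
nra.
Qed.

Arguments wd_is_derive {R u g x}.
Arguments wd_meas {R u g}.
Arguments wd_locint {R u g}.
Arguments pointwise_ineq {R u1 u2 g1 g2 phi dphi x}.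
Arguments amgm {R s m r dp G}.

Theorem corollary3 (R : realType) (u1 u2 g1 g2 phi dphi : R -> R) :
  in_tX1 u1 u2 g1 g2 ->
  is_phase u1 u2 phi -> weak_deriv phi dphi ->
  let E := energy u1 u2 g1 g2 in
  let p := momentum u1 u2 dphi in
  (p != 0 -> inf [set modv u1 u2 x | x in [set: R]] <= E / (Num.sqrt 2 * `|p|)) /\
  (p != 0 -> 0 < 1 - E / (Num.sqrt 2 * `|p|) ->
     forall delta : R, 0 < delta -> delta < 1 - E / (Num.sqrt 2 * `|p|) ->
       exists x : R, delta <= 1 - modv u1 u2 x).
Proof.
move=> H ph wdp E p.
case: H => H pos; case: H => _ [wd1 [wd2 [L1 [L2 L3]]]].
case: L1 => mg1 ig1; case: L2 => mg2 ig2; case: L3 => mB iB.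
set S := [set modv u1 u2 x | x in [set: R]].
set s := Num.sqrt (2 : R).
have ss : s * s = 2 by rewrite -expr2 sqr_sqrtr // ler0n.
have s0 : 0 < s by rewrite sqrtr_gt0 ltr0n.
have S0 : S !=set0 by exists (modv u1 u2 0); exists 0.
have Slb : has_lbound S by exists 0 => _ [x _ <-]; exact: sqrtr_ge0.
have part1 : p != 0 -> inf S <= E / (s * `|p|).
  move=> p0.
  have E0 : 0 <= E.
    rewrite /E /energy addr_ge0 // mulr_ge0 // ?invr_ge0 ?ler0n //;
      apply: Rintegral_ge0 => x _; rewrite ?addr_ge0 ?sqr_ge0 //.
  have [m0|m0] := leP (inf S) 0.
    apply: le_trans m0 _; rewrite divr_ge0 // mulr_ge0 // ltW //.
  set m := inf S in m0 *.
  have mle : forall x, m <= modv u1 u2 x by move=> x; apply: ge_inf => //; exists x.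
  pose G x := g1 x ^+ 2 + g2 x ^+ 2.
  pose h x := 2^-1 * G x + 4^-1 * (1 - modv u1 u2 x ^+ 2) ^+ 2.
  pose f x := (modv u1 u2 x ^+ 2 - 1) * dphi x.
  have iG : lebesgue_measure.-integrable setT (EFin \o G).
    apply: (eq_integrable measurableT _ _ _ (integrableD measurableT ig1 ig2)).
    by move=> x _; rewrite /G /= EFinD.
  have ih : lebesgue_measure.-integrable setT (EFin \o h).
    apply: (eq_integrable measurableT _ _ _ (integrableD measurableT (integrableZl measurableT (2^-1) iG)
       (integrableZl measurableT (4^-1) iB))).
    by move=> x _; rewrite /h /= EFinD !EFinM.
  have Eh : E = Rintegral lebesgue_measure setT h.
    rewrite /E /energy /h [in RHS]RintegralD //; last first.
    - exact: (integrableZl measurableT (4^-1) iB).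
    - exact: (integrableZl measurableT (2^-1) iG).
    rewrite RintegralZl // RintegralZl //.
  have mf : measurable_fun setT f.
    apply: measurable_funM; last exact: wd_meas wdp.
    have -> : (fun x => modv u1 u2 x ^+ 2 - 1) = (fun x => - (1 - modv u1 u2 x ^+ 2)).
      by apply/funext => x; rewrite opprB.
    exact: measurableT_comp.
  have mh : measurable_fun setT h.
    by move/integrableP: ih => [/measurable_EFinP].
  have L1 := lebesgue_differentiation (wd_locint wd1).
  have L2 := lebesgue_differentiation (wd_locint wd2).
  have L3 := lebesgue_differentiation (wd_locint wdp).
  have L23 := filterS2 (ae_filter_ringOfSetsType (@lebesgue_measure R))
     (fun x (a : lebesgue_pt g2 x) (b : lebesgue_pt dphi x) => conj a b) L2 L3.
  have Hae : {ae lebesgue_measure, forall x, setT x -> ((`|f x|)%:E <= (s / m * h x)%:E)%E}.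
    apply: (filterS2 (ae_filter_ringOfSetsType (@lebesgue_measure R)) _ L1 L23) => x l1 [l2 l3] _.
    have pw := pointwise_ineq ph (wd_is_derive wd1 l1) (wd_is_derive wd2 l2) (wd_is_derive wdp l3).
    have := amgm ss (ltW s0) (ltW m0) (mle x) pw.
    rewrite lee_fin mulrAC ler_pdivlMr // => H.
    by rewrite mulrC.
  have ich : lebesgue_measure.-integrable setT (fun x => ((s / m) * h x)%:E).
    apply: (eq_integrable measurableT _ _ _ (integrableZl measurableT (s / m) ih)).
    by move=> x _; rewrite EFinM.
  have bound : (\int[lebesgue_measure]_(x in setT) (`|f x|)%:E <=
                \int[lebesgue_measure]_(x in setT) ((s / m) * h x)%:E)%E.
    apply: ae_ge0_le_integral => //.
    - by apply/measurable_EFinP; apply: measurableT_comp.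
    - move=> x _; rewrite lee_fin mulr_ge0 //; first by rewrite divr_ge0 // ltW.
      rewrite /h /G addr_ge0 // mulr_ge0 ?invr_ge0 ?ler0n ?addr_ge0 ?sqr_ge0 //.
    - by apply/measurable_EFinP; apply: measurableT_comp.
  have iF : lebesgue_measure.-integrable setT (EFin \o f).
    apply/integrableP; split; first exact/measurable_EFinP.
    apply: le_lt_trans bound _.
    exact: integrable_lty.
  have key : `|Rintegral lebesgue_measure setT f| <= s / m * E.
    rewrite -lee_fin.
    have fI := integrable_fin_num measurableT iF.
    rewrite /Rintegral.
    have -> : ((`|fine (\int[lebesgue_measure]_(x in setT) (f x)%:E)|)%:E =
               `|\int[lebesgue_measure]_(x in setT) (f x)%:E|)%E.
      by rewrite -[in RHS](fineK fI).
    apply: le_trans (le_abse_integral _ _ _) _ => //.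
      exact/measurable_EFinP.
    apply: le_trans bound _.
    under eq_integral do rewrite EFinM.
    rewrite integralZl // Eh /Rintegral [X in (_ <= X)%E]EFinM fineK //.
    exact: integrable_fin_num.
  have pI : `|p| = 2^-1 * `|Rintegral lebesgue_measure setT f|.
    by rewrite /p /momentum normrM ger0_norm // invr_ge0 ler0n.
  have pp : 0 < `|p| by rewrite normr_gt0.
  rewrite ler_pdivlMr ?mulr_gt0 //.
  move: key; rewrite mulrAC ler_pdivlMr // => key.
  rewrite pI.
  move: key; set I := `|Rintegral _ _ _| => key.
  have -> : m * (s * (2^-1 * I)) = (s * (I * m)) / 2 by rewrite mulrC; field.
  rewrite ler_pdivrMr ?ltr0n //.
  have : s * (I * m) <= s * (s * E) by rewrite ler_wpM2l // ltW.
  by rewrite (mulrA s s E) ss (mulrC E).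
split => // p0 _ delta d0 dlt.
have eps0 : 0 < 1 - delta - inf S.
  by rewrite subr_gt0; apply: le_lt_trans (part1 p0) _; rewrite ltrBrDl -ltrBrDr.
have [y [x _ <-] hy] := inf_adherent eps0 (conj S0 Slb).
exists x; rewrite lerBrDl -lerBrDr; apply: ltW; move: hy.
by rewrite addrC subrK.
Qed.
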